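(* Let $n \geqslant 12$ be even and let $\lambda$ be a natural number with $2 \leqslant \lambda \leqslant \frac{n-4}{4}$. Then the partition $\left(\frac{n-2\lambda}{2},\ \lambda+2,\ 3,\ 2\times(\lambda-2),\ 1\times\frac{n-4\lambda-2}{2}\right)$ of $n$ corresponds to the eigenvalue $\lambda$.
   Context: In a partition, the notation $a\times t$ means that the part $a$ is repeated $t$ times (possibly $t=0$). An integer partition $(n_1,\dots,n_k)$ of $n$ (with $n_1\geqslant \dots\geqslant n_k\geqslant 1$, $\sum_j n_j=n$) is said to correspond to the eigenvalue $\lambda$ if $\lambda=\sum_{j=1}^k \frac{n_j(n_j-2j+1)}{2}$; this is the eigenvalue of the Transposition graph $T_n=\mathrm{Cay}(\mathrm{Sym}_n,T)$ ($T$ the set of all transpositions) associated with the irreducible character of $\mathrm{Sym}_n$ indexed by the partition. *)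

(* Defs.v *)
From mathcomp Require Import all_boot all_order all_algebra.
Set Implicit Arguments. Unset Strict Implicit. Unset Printing Implicit Defensive.
Import Order.TTheory GRing.Theory Num.Theory.

Definition is_partition (n : nat) (s : seq nat) : bool :=
  [&& sorted geq s, all (fun a => 0 < a)%N s & sumn s == n].

(* lambda(s) = sum_{j=1}^k n_j (n_j - 2 j + 1) / 2, computed in rat.
   Index i : 'I_(size s) corresponds to j = i + 1. *)
Definition partition_eigenvalue (s : seq nat) : rat :=
  (\sum_(i < size s)
     ((nth 0%N s i)%:R * ((nth 0%N s i)%:R - 2 * (i.+1)%:R + 1)) / 2)%R.

Definition corresponds_to (n : nat) (s : seq nat) (lam : rat) : Prop :=
  is_partition n s /\ partition_eigenvalue s = lam.

(* Main.v *)
Require Import Defs.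
From mathcomp Require Import all_boot all_order all_algebra.
From mathcomp Require Import ring lra zify.
Import Order.TTheory GRing.Theory Num.Theory.

Definition g (c j : nat) : rat :=
  ((c%:R * (c%:R - 2 * (j.+1)%:R + 1)) / 2)%R.

Lemma eigE s : partition_eigenvalue s = (\sum_(0 <= i < size s) g (nth 0%N s i) (i + 0))%R.
Proof. by rewrite big_mkord; apply: eq_bigr => i _; rewrite addn0. Qed.

Lemma sum_cat (s t : seq nat) o :
  (\sum_(0 <= i < size (s ++ t)) g (nth 0%N (s ++ t) i) (i + o) =
  \sum_(0 <= i < size s) g (nth 0%N s i) (i + o) +
  \sum_(0 <= i < size t) g (nth 0%N t i) (i + (size s + o)))%R.
Proof.
rewrite size_cat (@big_cat_nat _ _ _ (size s)) //=; last by rewrite leq_addr.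
congr (_ + _)%R.
  by apply: eq_big_nat => i /andP[_ Hi]; rewrite nth_cat Hi.
rewrite -{1}(add0n (size s)) big_addn addnC addnK.
apply: eq_big_nat => i _; rewrite nth_cat ltnNge leq_addl /= addnK addnA //.
Qed.

Lemma sum_nseq k c o :
  (\sum_(0 <= i < size (nseq k c)) g (nth 0%N (nseq k c) i) (i + o) =
   k%:R * c%:R * (c%:R - 1) / 2 - c%:R * (k%:R * o%:R + k%:R * (k%:R - 1) / 2))%R.
Proof.
rewrite size_nseq.
rewrite (@eq_big_nat _ _ _ 0 k _ (fun i => g c (i + o))); last first.
  by move=> i /andP[_ Hi]; rewrite nth_nseq Hi.
elim: k => [|k IH]; first by rewrite big_geq // !(mul0r, mulr0, add0r, subr0).
rewrite big_nat_recr //= IH /g.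
rewrite -[k.+1]addn1 -[(k+o).+1]addn1 !natrD. move: (k%:R : rat) (c%:R : rat) (o%:R : rat) => K C O. by field. Qed.

Lemma path_nseq m (x c : nat) : c <= x -> path geq x (nseq m c).
Proof. by elim: m x => [|m IH] x //= H; rewrite H IH. Qed.

Lemma last_nseq_ge m (x c : nat) : 1 <= c -> 1 <= x -> 1 <= last x (nseq m c).
Proof. by elim: m x => [|m IH] x //= H1 H2; apply: IH. Qed.
Theorem lemma4 (n lam : nat) :
  (12 <= n)%N -> ~~ odd n -> (2 <= lam)%N -> (4 * lam <= n - 4)%N ->
  corresponds_to n
    ([:: (n - 2 * lam) %/ 2; lam + 2; 3]
       ++ nseq (lam - 2) 2 ++ nseq ((n - 4 * lam - 2) %/ 2) 1)
    (lam%:R)%R.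
Proof.
move=> H12 Hev H2 Hl.
have [k Hk] : exists k, n = 4 * lam + 4 + 2 * k.
  have := odd_double_half n; move/negbTE: Hev => -> /=; rewrite add0n -mul2n => Hn.
  exists (n./2 - 2 * lam - 2). lia.
subst n.
have -> : (4 * lam + 4 + 2 * k - 2 * lam) %/ 2 = lam + 2 + k.
  by rewrite -(mulnK (lam + 2 + k) (isT : 0 < 2)); congr divn; lia.
have -> : (4 * lam + 4 + 2 * k - 4 * lam - 2) %/ 2 = k + 1.
  by rewrite -(mulnK (k + 1) (isT : 0 < 2)); congr divn; lia.
have [l ->] : exists l, lam = l + 2 by exists (lam - 2); lia.
rewrite addnK.
split.
  apply/and3P; split.
  - rewrite /sorted /= cat_path /=.
    apply/and4P; split; [lia | lia | | ].
    + by apply: path_nseq.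
    + by apply: path_nseq; apply: last_nseq_ge.
  - rewrite /= !all_cat !all_nseq /=; apply/and3P; split; lia.
  - rewrite /= !sumn_cat !sumn_nseq; apply/eqP; lia.
rewrite eigE sum_cat sum_cat !sum_nseq /=.
rewrite !big_nat_recl //= big_geq //= /g.
rewrite size_nseq ?addn0 ?add0n !natrD.
move: (l%:R : rat) (k%:R : rat) => L K.
by field.
Qed.
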